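(* Assume $t_m=1$. If $w$ is a left special factor of $u_\beta$, then either $w=0^r$ for some $r\in\mathbb N$ with $r\le t_1$, or $w=\varphi(v)0^s$ for some left special factor $v$ of $u_\beta$ and some $s\in\mathbb N$.
   Context: $\beta>1$ is a simple Parry number with $d_\beta(1)=t_1\cdots t_{m-1}t_m$, $m\ge2$, nonnegative integer digits, $t_1\ge1$, satisfying the Parry condition ($t_i\cdots t_m0^\omega$ lexicographically strictly smaller than $t_1\cdots t_m0^\omega$ for $2\le i\le m$). $\varphi$ is the substitution on $\mathcal A=\{0,\dots,m-1\}$ with $\varphi(k)=0^{t_{k+1}}(k+1)$ for $0\le k\le m-2$, $\varphi(m-1)=0^{t_m}$ (so $\varphi(m-1)=0$ when $t_m=1$), and $u_\beta=\lim_n\varphi^n(0)$ is its fixed point. A factor $w$ is left special if at least two distinct letters $a$ make $aw$ a factor of $u_\beta$. *)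

(* Defs.v *)
From mathcomp Require Import all_boot.
Set Implicit Arguments. Unset Strict Implicit. Unset Printing Implicit Defensive.

(* d_beta(1) = t_1 ... t_m is represented by the list t, with t_i = nth 0 t (i-1)
   and m = size t.  Letters of the alphabet {0,...,m-1} are natural numbers. *)

Definition tpad (t : seq nat) (n : nat) : nat := nth 0 t n.

(* Parry condition: for 2 <= i <= m, t_i ... t_m 0^omega <_lex t_1 ... t_m 0^omega
   (strict lexicographic order on infinite sequences). *)
Definition parry_condition (t : seq nat) : Prop :=
  forall i, 2 <= i <= size t ->
    exists k, (forall j, j < k -> tpad t (i.-1 + j) = tpad t j)
              /\ tpad t (i.-1 + k) < tpad t k.

Definition phi (t : seq nat) (k : nat) : seq nat :=
  if k < (size t).-1 then rcons (nseq (nth 0 t k) 0) k.+1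
  else nseq (nth 0 t (size t).-1) 0.

Definition phiw (t : seq nat) (w : seq nat) : seq nat := flatten (map (phi t) w).

(* The fixed point u_beta = lim phi^n(0): its n-th letter is read off the
   prefix phi^{n+1}(0), which has length > n (phi(0) starts with 0 since t_1 >= 1,
   so the words phi^k(0) form a strictly increasing chain of prefixes). *)
Definition ubeta (t : seq nat) (n : nat) : nat :=
  nth 0 (iter n.+1 (phiw t) [:: 0]) n.

Definition factor (t : seq nat) (w : seq nat) : Prop :=
  exists i, w = mkseq (fun j => ubeta t (i + j)) (size w).

Definition left_special (t : seq nat) (w : seq nat) : Prop :=
  exists a b, a <> b /\ factor t (a :: w) /\ factor t (b :: w).

(* Main.v *)
Require Import Defs.
From mathcomp Require Import all_boot zify.

Definition P t n := iter n (phiw t) [::0].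
Definition pref t j := mkseq (ubeta t) j.
Definition pos t j := size (phiw t (pref t j)).

Lemma phiw_cat t x y : phiw t (x ++ y) = phiw t x ++ phiw t y.
Proof. by rewrite /phiw map_cat flatten_cat. Qed.

Lemma phiw_cons t x y : phiw t (x :: y) = phi t x ++ phiw t y.
Proof. by []. Qed.

Lemma phiw_rcons t x y : phiw t (rcons x y) = phiw t x ++ phi t y.
Proof. by rewrite -cats1 phiw_cat /phiw /= cats0. Qed.

Lemma phi_size t k : 2 <= size t -> nth 0 t (size t).-1 = 1 ->
  size (phi t k) = if k < (size t).-1 then (nth 0 t k).+1 else 1.
Proof.
move=> hm htm; rewrite /phi; case: ifP => _; first by rewrite size_rcons size_nseq.
by rewrite size_nseq htm.
Qed.

Lemma phi_pos t k : 2 <= size t -> nth 0 t (size t).-1 = 1 -> 0 < size (phi t k).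
Proof. by move=> hm htm; rewrite phi_size //; case: ifP. Qed.

Lemma phi_nth t y k : nth 0 (phi t y) k != 0 ->
  y < (size t).-1 /\ k = nth 0 t y /\ nth 0 (phi t y) k = y.+1.
Proof.
rewrite /phi; case: ifP => hy.
  rewrite nth_rcons size_nseq nth_nseq.
  case: ltnP => h1 //; case: ifP => [/eqP ->|] //.
by rewrite nth_nseq; case: ifP.
Qed.

Lemma phi_zero t y e : y < (size t).-1 -> e < nth 0 t y -> nth 0 (phi t y) e = 0.
Proof. by move=> hy he; rewrite /phi hy nth_rcons size_nseq nth_nseq he. Qed.

Lemma phi_last t y : 2 <= size t -> nth 0 t (size t).-1 = 1 ->
  last 0 (phi t y) = if y < (size t).-1 then y.+1 else 0.
Proof.
move=> hm htm; rewrite /phi; case: ifP => _; first by rewrite last_rcons.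
by rewrite htm.
Qed.

Lemma size_phiw t l : 2 <= size t -> nth 0 t (size t).-1 = 1 ->
  size l <= size (phiw t l).
Proof.
move=> hm htm; elim: l => //= x l IH.
rewrite phiw_cons size_cat; have := phi_pos t x hm htm; lia.
Qed.

Lemma P_step t n : 2 <= size t -> 1 <= nth 0 t 0 -> exists s, P t n.+1 = P t n ++ s.
Proof.
move=> hm ht1; elim: n => [|n [s IH]].
  exists (rcons (nseq (nth 0 t 0).-1 0) 1).
  rewrite /P /= /phiw /= cats0 /phi.
  have -> : 0 < (size t).-1 by lia.
  by case: (nth 0 t 0) ht1.
exists (phiw t s).
change (phiw t (P t n.+1) = P t n.+1 ++ phiw t s); rewrite {1}IH phiw_cat.
by [].
Qed.

Lemma P_chain t a d : 2 <= size t -> 1 <= nth 0 t 0 -> exists s, P t (a + d) = P t a ++ s.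
Proof.
move=> hm ht1; elim: d => [|d [s IH]]; first by exists [::]; rewrite addn0 cats0.
have [s' e] := P_step t (a + d) hm ht1.
by exists (s ++ s'); rewrite addnS e IH catA.
Qed.

Lemma P_head t n : 2 <= size t -> 1 <= nth 0 t 0 -> exists s, P t n = 0 :: s.
Proof. by move=> hm ht1; have [s e] := P_chain t 0 n hm ht1; exists s; rewrite e. Qed.

Lemma P_size t n : 2 <= size t -> 1 <= nth 0 t 0 -> nth 0 t (size t).-1 = 1 ->
  n < size (P t n).
Proof.
move=> hm ht1 htm; elim: n => [|n IH]; first by [].
have [s e] := P_head t n hm ht1.
change (n.+1 < size (phiw t (P t n))).
move: IH; rewrite e phiw_cons size_cat /=.
have h1 := size_phiw t s hm htm.
have h2 : 2 <= size (phi t 0) by rewrite phi_size //; have -> : 0 < (size t).-1 by lia.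
lia.
Qed.

Lemma ubetaE t N n : 2 <= size t -> 1 <= nth 0 t 0 -> nth 0 t (size t).-1 = 1 ->
  n < size (P t N) -> ubeta t n = nth 0 (P t N) n.
Proof.
move=> hm ht1 htm hn.
have hn1 : n < size (P t n.+1) by have := P_size t n.+1 hm ht1 htm; lia.
rewrite /ubeta -/(P t n.+1).
case: (leqP N n.+1) => h.
  have [s e] := P_chain t N (n.+1 - N) hm ht1.
  by rewrite subnKC // in e; rewrite e nth_cat hn.
have [s e] := P_chain t n.+1 (N - n.+1) hm ht1.
by rewrite subnKC in e; [rewrite e nth_cat hn1 | lia].
Qed.

Lemma all_phiw t l : all (fun x => x < size t) l -> all (fun x => x < size t) (phiw t l).
Proof.
elim: l => //= x l IH /andP [hx hl]; rewrite phiw_cons all_cat IH // andbT.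
rewrite /phi; case: ifP => h.
  rewrite all_rcons all_nseq; apply/andP; split; first lia.
  by apply/orP; right; lia.
by rewrite all_nseq; apply/orP; right; lia.
Qed.

Lemma ubeta_lt t n : 2 <= size t -> 1 <= nth 0 t 0 -> nth 0 t (size t).-1 = 1 ->
  ubeta t n < size t.
Proof.
move=> hm ht1 htm.
have hall : forall N, all (fun x => x < size t) (P t N).
  elim=> [|N IH] /=; first by rewrite /P /=; lia.
  by apply: all_phiw.
have hn := P_size t n hm ht1 htm.
rewrite (ubetaE t n n hm ht1 htm hn).
by move/allP: (hall n); apply; apply: mem_nth.
Qed.

Lemma PF t j k : 2 <= size t -> 1 <= nth 0 t 0 -> nth 0 t (size t).-1 = 1 ->
  k < pos t j -> ubeta t k = nth 0 (phiw t (pref t j)) k.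
Proof.
move=> hm ht1 htm hk.
have hs := P_size t j hm ht1 htm.
have e1 : take j (P t j) = pref t j.
  apply: (@eq_from_nth _ 0); first by rewrite size_take size_mkseq hs.
  move=> i; rewrite size_take hs => hi.
  rewrite nth_take // nth_mkseq // (ubetaE t j i hm ht1 htm) //; lia.
have e2 : P t j.+1 = phiw t (pref t j) ++ phiw t (drop j (P t j)).
  by rewrite -phiw_cat -e1 cat_take_drop.
have hk2 : k < size (P t j.+1) by rewrite e2 size_cat; move: hk; rewrite /pos; lia.
by rewrite (ubetaE t j.+1 k hm ht1 htm hk2) e2 nth_cat hk.
Qed.

Lemma pref_split t a b : pref t (a + b) = pref t a ++ mkseq (fun k => ubeta t (a + k)) b.
Proof.
apply: (@eq_from_nth _ 0); first by rewrite size_cat !size_mkseq.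
move=> k; rewrite size_mkseq => hk.
rewrite /pref nth_cat size_mkseq nth_mkseq //; case: ltnP => h; first by rewrite nth_mkseq.
by rewrite nth_mkseq; [rewrite subnKC | lia].
Qed.

Lemma pos_S t j : pos t j.+1 = pos t j + size (phi t (ubeta t j)).
Proof. by rewrite /pos /pref mkseqS phiw_rcons size_cat. Qed.

Lemma pos0 t : pos t 0 = 0.
Proof. by []. Qed.

Lemma block t j k : 2 <= size t -> 1 <= nth 0 t 0 -> nth 0 t (size t).-1 = 1 ->
  k < size (phi t (ubeta t j)) -> ubeta t (pos t j + k) = nth 0 (phi t (ubeta t j)) k.
Proof.
move=> hm ht1 htm hk.
rewrite (PF t j.+1 _ hm ht1 htm); last by rewrite pos_S; lia.
by rewrite /pref mkseqS phiw_rcons nth_cat -/(pref t j) -/(pos t j) ltnNge leq_addr /= addKn.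
Qed.

Lemma pos_lt t a b : 2 <= size t -> nth 0 t (size t).-1 = 1 -> a < b -> pos t a < pos t b.
Proof.
move=> hm htm; elim: b => // b IH hab.
rewrite pos_S; have := phi_pos t (ubeta t b) hm htm.
case: (ltngtP a b) => h; [have := IH h; lia | lia | rewrite h; lia].
Qed.

Lemma pos_lt_inv t a b : 2 <= size t -> nth 0 t (size t).-1 = 1 -> pos t a < pos t b -> a < b.
Proof.
move=> hm htm h; case: (ltngtP a b) => // h'.
  by have := pos_lt t b a hm htm h'; lia.
by move: h; rewrite h'; lia.
Qed.

Lemma pos_cover t p : 2 <= size t -> nth 0 t (size t).-1 = 1 ->
  exists j, pos t j <= p < pos t j.+1.
Proof.
move=> hm htm; elim: p => [|p [j /andP [h1 h2]]].
  by exists 0; rewrite pos0 /=; have := pos_lt t 0 1 hm htm isT; rewrite pos0.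
case: (ltnP p.+1 (pos t j.+1)) => h3; first by exists j; rewrite h3 andbT; lia.
exists j.+1; have := pos_lt t j.+1 j.+2 hm htm (ltnSn _); lia.
Qed.

Lemma nz_block t p : 2 <= size t -> 1 <= nth 0 t 0 -> nth 0 t (size t).-1 = 1 ->
  ubeta t p != 0 -> exists j, pos t j + nth 0 t (ubeta t j) = p /\
     ubeta t j < (size t).-1 /\ ubeta t p = (ubeta t j).+1 /\ pos t j.+1 = p.+1.
Proof.
move=> hm ht1 htm hp.
have [j /andP [h1 h2]] := pos_cover t p hm htm.
move: h2; rewrite pos_S => h2.
have hb := block t j (p - pos t j) hm ht1 htm ltac:(lia).
rewrite subnKC // in hb.
move: hp; rewrite hb => hp.
have [hy [hk hv]] := phi_nth t _ _ hp.
exists j; split; first lia.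
split => //; split => //.
rewrite pos_S phi_size // hy; lia.
Qed.

Lemma zero_back t d j : 2 <= size t -> 1 <= nth 0 t 0 -> nth 0 t (size t).-1 = 1 ->
  d <= pos t j -> (forall e, e < d -> ubeta t (pos t j - e.+1) = 0) ->
  d <= j /\ pos t (j - d) = pos t j - d.
Proof.
move=> hm ht1 htm; elim: d => [|d IH] hd hz; first by rewrite !subn0.
have [h1 h2] := IH ltac:(lia) (fun e he => hz e ltac:(lia)).
have hjd : 0 < j - d.
  case: (posnP (j - d)) => // h0; move: h2; rewrite h0 pos0; lia.
set j' := j - d.+1.
have ej : j - d = j'.+1 by rewrite /j'; lia.
have hS := pos_S t j'.
rewrite ej in h2.
set sz := size (phi t (ubeta t j')) in hS.
have hsz : 0 < sz := phi_pos t _ hm htm.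
have hb := block t j' sz.-1 hm ht1 htm ltac:(lia).
rewrite nth_last in hb.
have e0 : pos t j' + sz.-1 = pos t j - d.+1 by lia.
rewrite e0 hz // phi_last // in hb.
move: hb; case: ifP => // hy _.
have hs1 : sz = 1 by rewrite /sz phi_size // hy.
split; first lia.
rewrite -/j'; lia.
Qed.

Lemma factorP t w : factor t w <-> exists i, forall k, k < size w -> nth 0 w k = ubeta t (i + k).
Proof.
split=> [[i e] | [i h]]; exists i.
  by move=> k hk; rewrite e nth_mkseq.
apply: (@eq_from_nth _ 0); first by rewrite size_mkseq.
by move=> k hk; rewrite nth_mkseq // h.
Qed.

Lemma occA t i x w r : 2 <= size t -> 1 <= nth 0 t 0 -> nth 0 t (size t).-1 = 1 ->
  ubeta t i = x -> (forall k, k < size w -> nth 0 w k = ubeta t (i.+1 + k)) ->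
  r < size w -> nth 0 w r != 0 -> r < nth 0 t (nth 0 w r).-1 -> x = 0.
Proof.
move=> hm ht1 htm hx hw hr hc hlt.
have hp : ubeta t (i.+1 + r) != 0 by rewrite -hw.
have [j [h1 [h2 [h3 h4]]]] := nz_block t _ hm ht1 htm hp.
move: hlt; rewrite hw // h3 /= => hlt.
have e : i = pos t j + (nth 0 t (ubeta t j) - r.+1) by lia.
rewrite -hx e block //; first by rewrite phi_zero //; lia.
rewrite phi_size // h2; lia.
Qed.

Lemma occB t i x w r q : 2 <= size t -> 1 <= nth 0 t 0 -> nth 0 t (size t).-1 = 1 ->
  ubeta t i = x -> (forall k, k < size w -> nth 0 w k = ubeta t (i.+1 + k)) ->
  r < size w -> (forall k, k < r -> nth 0 w k = 0) -> nth 0 w r != 0 ->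
  nth 0 t (nth 0 w r).-1 <= r -> q < size w -> nth 0 w q != 0 ->
  exists j v, 0 < j /\ x = last 0 (phi t (ubeta t j.-1)) /\
    (forall k, k < size v -> nth 0 v k = ubeta t (j + k)) /\ phiw t v = take q.+1 w.
Proof.
move=> hm ht1 htm hx hw hr hz hc hle hq hcq.
have hp : ubeta t (i.+1 + r) != 0 by rewrite -hw.
have [j [h1 [h2 [h3 h4]]]] := nz_block t _ hm ht1 htm hp.
move: hle; rewrite hw // h3 /= => hle.
set T := nth 0 t (ubeta t j) in h1 hle.
have hzb : forall e, e < r - T -> ubeta t (pos t j - e.+1) = 0.
  move=> e he.
  have -> : pos t j - e.+1 = i.+1 + (r - T - e.+1) by lia.
  rewrite -hw; [apply: hz | ]; lia.
have [hd hj0] := zero_back t (r - T) j hm ht1 htm ltac:(lia) hzb.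
set j0 := j - (r - T) in hj0.
have hpj0 : pos t j0 = i.+1 by lia.
have hj0pos : 0 < j0.
  case: (posnP j0) => // h0; move: hpj0; rewrite h0 pos0; lia.
exists j0.
have hpq : ubeta t (i.+1 + q) != 0 by rewrite -hw.
have [j' [h1' [h2' [h3' h4']]]] := nz_block t _ hm ht1 htm hpq.
have hlt : j0 < j'.+1 by apply: (pos_lt_inv t _ _ hm htm); lia.
exists (mkseq (fun k => ubeta t (j0 + k)) (j'.+1 - j0)).
split => //; split.
  have ej : j0 = j0.-1.+1 by lia.
  have hS := pos_S t j0.-1; rewrite -ej in hS.
  have hsz := phi_pos t (ubeta t j0.-1) hm htm.
  have hb := block t j0.-1 (size (phi t (ubeta t j0.-1))).-1 hm ht1 htm ltac:(lia).
  rewrite nth_last in hb; rewrite -hb -hx; congr ubeta; lia.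
split; first by move=> k; rewrite size_mkseq => hk; rewrite nth_mkseq.
have hsp := pref_split t j0 (j'.+1 - j0).
rewrite subnKC in hsp; last lia.
have hsz : size (phiw t (mkseq (fun k => ubeta t (j0 + k)) (j'.+1 - j0))) = q.+1.
  move: h4'; rewrite /pos hsp phiw_cat size_cat -/(pos t j0) hpj0; lia.
apply: (@eq_from_nth _ 0); first by rewrite hsz size_take; case: ltnP; lia.
move=> k; rewrite hsz => hk.
rewrite nth_take // hw; last lia.
rewrite (PF t j'.+1 (i.+1 + k) hm ht1 htm); last lia.
by rewrite hsp phiw_cat nth_cat -/(pos t j0) hpj0 ltnNge leq_addr /= addKn.
Qed.

Lemma cat_cancel_r (A B C : seq nat) : A ++ B = C ++ B -> A = C.
Proof.
move=> e; have hs : size A = size C by move/(congr1 size): e; rewrite !size_cat; lia.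
by have := congr1 (take (size A)) e; rewrite take_size_cat // hs take_size_cat.
Qed.

Lemma phiw_inj t v v' : 2 <= size t -> nth 0 t (size t).-1 = 1 ->
  all (fun x => x < size t) v -> all (fun x => x < size t) v' ->
  phiw t v = phiw t v' -> v = v'.
Proof.
move=> hm htm; elim/last_ind: v v' => [|v x IH] v'.
  case/lastP: v' => // v' x' _ _; rewrite phiw_rcons /= => /(congr1 size).
  rewrite size_cat => h; exfalso; rewrite (_ : phiw t [::] = [::]) //= in h; have := phi_pos t x' hm htm; lia.
case/lastP: v' => [|v' x'].
  move=> _ _; rewrite phiw_rcons /= => /(congr1 size).
  rewrite size_cat => h; exfalso; rewrite (_ : phiw t [::] = [::]) //= in h; have := phi_pos t x hm htm; lia.
rewrite !all_rcons => /andP [hx hv] /andP [hx' hv'].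
rewrite !phiw_rcons => e.
have lastE : forall A y, last 0 (A ++ phi t y) = last 0 (phi t y).
  move=> A y; rewrite last_cat; have := phi_pos t y hm htm.
  by case: (phi t y).
have el := congr1 (last 0) e; rewrite !lastE !phi_last // in el.
have exx : x = x'.
  move: el; case: ifP => h1; case: ifP => h2 //; [by case | lia].
subst x'; rewrite (IH v') //; exact: cat_cancel_r e.
Qed.

Lemma last_nz (w : seq nat) : has (fun x => x != 0) w ->
  exists q, q < size w /\ nth 0 w q != 0 /\ forall k, q < k < size w -> nth 0 w k = 0.
Proof.
elim/last_ind: w => // w y IH.
rewrite -cats1 has_cat /= orbF.
case: (eqVneq y 0) => hy.
  rewrite orbF => /IH [q [h1 [h2 h3]]]; exists q; rewrite size_cat /= nth_cat h1; split; first lia.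
  split => // k /andP [hk1 hk2]; rewrite nth_cat; case: ltnP => h.
    by apply: h3; rewrite hk1 h.
  by have -> : k - size w = 0 by lia.
move=> _; exists (size w); rewrite size_cat /= nth_cat ltnn subnn /=; split; first lia.
split => // k; lia.
Qed.

Lemma occ_of_factor t a w : factor t (a :: w) ->
  exists i, ubeta t i = a /\ forall k, k < size w -> nth 0 w k = ubeta t (i.+1 + k).
Proof.
move/factorP => [i h]; exists i; split; first by have := h 0 isT; rewrite addn0.
by move=> k hk; have := h k.+1 hk; rewrite addnS addSn.
Qed.

Lemma all_ubeta t j v : 2 <= size t -> 1 <= nth 0 t 0 -> nth 0 t (size t).-1 = 1 ->
  (forall k, k < size v -> nth 0 v k = ubeta t (j + k)) -> all (fun x => x < size t) v.
Proof.
move=> hm ht1 htm h; apply/allP => x /(nthP 0) [k hk <-].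
by rewrite h // ubeta_lt.
Qed.

Theorem lemma7 (t : seq nat) :
  2 <= size t ->
  1 <= nth 0 t 0 ->
  parry_condition t ->
  nth 0 t (size t).-1 = 1 ->
  forall w : seq nat, left_special t w ->
    (exists r : nat, r <= nth 0 t 0 /\ w = nseq r 0) \/
    (exists (v : seq nat) (s : nat), left_special t v /\ w = phiw t v ++ nseq s 0).
Proof.
move=> hm ht1 _ htm w [a [b [hab [fa fb]]]].
right.
have [ia [hia hwa]] := occ_of_factor t a w fa.
have [ib [hib hwb]] := occ_of_factor t b w fb.
case hasw: (has (fun x => x != 0) w); last first.
  exists [::], (size w); split.
    have hP1 : P t 1 = rcons (nseq (nth 0 t 0) 0) 1.
      by rewrite /P /= /phiw /= cats0 /phi (_ : 0 < (size t).-1) //; lia.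
    have hs1 : size (P t 1) = (nth 0 t 0).+1 by rewrite hP1 size_rcons size_nseq.
    exists 0, 1; split => //; split; apply/factorP.
      exists 0 => k /=; rewrite ltnS leqn0 => /eqP ->.
      by rewrite (ubetaE t 1 0 hm ht1 htm) ?hs1 // hP1 nth_rcons size_nseq ht1 nth_nseq ht1.
    exists (nth 0 t 0) => k /=; rewrite ltnS leqn0 => /eqP ->.
    rewrite addn0 (ubetaE t 1 _ hm ht1 htm) ?hs1 // hP1 nth_rcons size_nseq ltnn eqxx //.
  apply: (@eq_from_nth _ 0); first by rewrite size_nseq.
  move=> k hk; rewrite nth_nseq hk.
  case e: (nth 0 w k == 0); first by apply/eqP.
  by move: hasw; have -> : has (fun x => x != 0) w by apply/(has_nthP 0); exists k => //; rewrite e.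
set r := find (fun x => x != 0) w.
have hr : r < size w by rewrite -has_find hasw.
have hc : nth 0 w r != 0 by exact: (nth_find 0 (introT idP hasw)).
have hz : forall k, k < r -> nth 0 w k = 0.
  by move=> k hk; apply/eqP; have := before_find 0 hk; case: eqP.
have [q [hq [hcq hqz]]] := last_nz w (introT idP hasw).
case: (ltnP r (nth 0 t (nth 0 w r).-1)) => hT.
  have ha0 := occA t ia a w r hm ht1 htm hia hwa hr hc hT.
  have hb0 := occA t ib b w r hm ht1 htm hib hwb hr hc hT.
  by case: hab; rewrite ha0 hb0.
have [ja [va [hja [ea [hva pva]]]]] := occB t ia a w r q hm ht1 htm hia hwa hr hz hc hT hq hcq.
have [jb [vb [hjb [eb [hvb pvb]]]]] := occB t ib b w r q hm ht1 htm hib hwb hr hz hc hT hq hcq.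
have evab : va = vb.
  apply: (phiw_inj t va vb hm htm); [exact: all_ubeta hva | exact: all_ubeta hvb | by rewrite pva pvb].
exists va, (size w - q.+1); split.
  exists (ubeta t ja.-1), (ubeta t jb.-1); split.
    by move=> e; apply: hab; rewrite ea eb e.
  split; apply/factorP.
    exists ja.-1 => k /=; case: k => [|k] hk; first by rewrite addn0.
    rewrite /= hva //; congr ubeta; lia.
  exists jb.-1 => k /=; case: k => [|k] hk; first by rewrite addn0.
  rewrite /= evab hvb; first (congr ubeta; lia). by rewrite -evab.
rewrite pva -{1}(cat_take_drop q.+1 w); congr cat.
apply: (@eq_from_nth _ 0); first by rewrite size_drop size_nseq.
move=> k; rewrite size_drop => hk.
rewrite nth_drop nth_nseq hk; apply: hqz; lia.
Qed.
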